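(* Let $g:\mathbb{R}^r\to\mathbb{R}^{\ell}$ and $m:\mathcal{A}\to\mathbb{R}^{\ell}$ (with $\mathcal{A}\subset\mathbb{R}^s$) be given vector-valued functions, let $\{P_1(\cdot|\theta):\theta\in\Theta\}$, $\Theta\subset\mathbb{R}^d$, be a parametric family of probability measures on $(\mathbb{R}^r,\mathcal{B}(\mathbb{R}^r))$, and for $\alpha\in\mathcal{A}$ let $$\mathcal{M}_\alpha=\Big\{Q \text{ finite signed measure on } \mathbb{R}^r:\ \int dQ=1,\ \int g\,dQ=m(\alpha)\Big\}.$$ Let $P_T$ be a given mixture distribution of the form $P_T=\lambda^*P_1(\cdot|\theta^* )+(1-\lambda^* )P_0^*$ with $\lambda^*\in(0,1)$, $\theta^*\in\Theta$, $P_0^*\in\mathcal{M}_{\alpha^*}$, $\alpha^*\in\mathcal{A}$. Put $m^*=\int g(x)\,dP_T(x)$ and $m_1(\theta)=\int g(x)\,dP_1(x|\theta)$. Suppose that the system of equations $$\frac{1}{1-\lambda}m^*-\frac{\lambda}{1-\lambda}m_1(\theta)=m(\alpha)$$ in the unknowns $(\lambda,\theta,\alpha)\in(0,1)\times\Theta\times\mathcal{A}$ has a unique solution $(\lambda^*,\theta^*,\alpha^* )$. Then whenever $$P_T=\lambda P_1(\cdot|\theta)+(1-\lambda)P_0=\tilde\lambda P_1(\cdot|\tilde\theta)+(1-\tilde\lambda)\tilde P_0$$ with $\lambda,\tilde\lambda\in(0,1)$, $\theta,\tilde\theta\in\Theta$, $P_0\in\mathcal{M}_\alpha$, $\tilde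 P_0\in\mathcal{M}_{\tilde\alpha}$, $\alpha,\tilde\alpha\in\mathcal A$, we have $\lambda=\tilde\lambda$, $\theta=\tilde\theta$ and $P_0=\tilde P_0$; i.e. the semiparametric mixture model is identifiable at $P_T$.
   Context: A two-component semiparametric mixture model subject to linear constraints is a probability measure of the form $P(\cdot|\phi)=\lambda P_1(\cdot|\theta)+(1-\lambda)P_0$ with $\phi=(\lambda,\theta,\alpha)$, $\lambda\in(0,1)$, $\theta\in\Theta$, and $P_0\in\mathcal{M}_\alpha$. It is called identifiable if any two such representations of the same measure have equal $\lambda$, equal $\theta$ and equal $P_0$. *)

(* Defs.v *)
From HB Require Import structures.
From mathcomp Require Import all_boot all_order all_algebra.
From mathcomp Require Import all_classical all_reals all_analysis.
Set Implicit Arguments. Unset Strict Implicit. Unset Printing Implicit Defensive.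
Import Order.TTheory GRing.Theory Num.Theory.
Import numFieldNormedType.Exports.
Local Open Scope classical_set_scope.
Local Open Scope ring_scope.

(* Sample space R^r is r.-tuple R with its product (= Borel) sigma-algebra.
   Finite signed measures are MathComp-Analysis charges (finite-valued).
   Integration against a signed measure is defined through its Jordan
   decomposition Q = Q^+ - Q^-, obtained from a (chosen) Hahn decomposition. *)

Section signed_integration.
Context (d : measure_display) (T : measurableType d) (R : realType).

Definition hahn_pair (Q : {charge set T -> \bar R}) : {PN : set T * set T | hahn_decomposition Q PN.1 PN.2}.
Proof.
have /cid [P HP] := Hahn_decomposition Q.
have /cid [N HN] := HP.
by exists (P, N).
Defined.

Definition jpos (Q : {charge set T -> \bar R}) := jordan_pos (svalP (hahn_pair Q)).
Definition jneg (Q : {charge set T -> \bar R}) := jordan_neg (svalP (hahn_pair Q)).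

Definition s_integrable (Q : {charge set T -> \bar R}) (f : T -> R) : Prop :=
  (jpos Q).-integrable setT (EFin \o f) /\ (jneg Q).-integrable setT (EFin \o f).

Definition s_integral (Q : {charge set T -> \bar R}) (f : T -> R) : \bar R :=
  (\int[jpos Q]_x (f x)%:E - \int[jneg Q]_x (f x)%:E)%E.

End signed_integration.

Definition M_set (R : realType) (r l s : nat)
  (g : r.-tuple R -> 'rV[R]_l) (m : 'rV[R]_s -> 'rV[R]_l) (alpha : 'rV[R]_s)
  (Q : {charge set (r.-tuple R) -> \bar R}) : Prop :=
  Q [set: r.-tuple R] = 1%:E /\
  forall i : 'I_l, s_integrable Q (fun x => g x 0 i) /\
                   s_integral Q (fun x => g x 0 i) = (m alpha 0 i)%:E.

Definition s_vint (R : realType) (r l : nat) (g : r.-tuple R -> 'rV[R]_l)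
  (Q : {charge set (r.-tuple R) -> \bar R}) : 'rV[R]_l :=
  \row_(i < l) fine (s_integral Q (fun x => g x 0 i)).

Definition p_vint (R : realType) (r l : nat) (g : r.-tuple R -> 'rV[R]_l)
  (P : probability (r.-tuple R) R) : 'rV[R]_l :=
  \row_(i < l) fine (\int[P]_x (g x 0 i)%:E)%E.

(* Main.v *)
Require Import Defs.
From HB Require Import structures.
From mathcomp Require Import all_boot all_order all_algebra.
From mathcomp Require Import all_classical all_reals all_analysis.
From mathcomp Require Import measurable_realfun lebesgue_integral charge.
From mathcomp Require Import ring lra.
Import Order.TTheory GRing.Theory Num.Theory.
Import numFieldNormedType.Exports.
Local Open Scope classical_set_scope.
Local Open Scope ring_scope.



Lemma key_int d (T : measurableType d) (R : realType)
  (mu1 mu2 nu1 nu2 : {measure set T -> \bar R}) :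
  (forall E, measurable E -> mu1 E + nu2 E = nu1 E + mu2 E)%E ->
  forall h : T -> \bar R, (forall x, 0 <= h x)%E -> measurable_fun [set: T] h ->
  (\int[mu1]_x h x + \int[nu2]_x h x = \int[nu1]_x h x + \int[mu2]_x h x)%E.
Proof.
move=> H h h0 mh.
rewrite -!ge0_integral_measure_add//.
apply: eq_measure_integral => A mA _.
rewrite /= /msum !big_ord_recl /= !big_ord0 !adde0; exact: H.
Qed.


Section helpers.
Context d (T : measurableType d) (R : realType).
Local Open Scope ereal_scope.

Lemma fin_int (mu nu rho : {measure set T -> \bar R}) :
  (forall E, measurable E -> mu E + nu E = rho E) ->
  forall h : T -> \bar R, (forall x, 0 <= h x) -> measurable_fun [set: T] h ->
  \int[rho]_x h x < +oo -> \int[mu]_x h x < +oo.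
Proof.
move=> H h h0 mh hr.
have : \int[measure_add mu nu]_x h x = \int[rho]_x h x.
  apply: eq_measure_integral => A mA _.
  rewrite /= /msum !big_ord_recl /= !big_ord0 !adde0; exact: H.
rewrite ge0_integral_measure_add// => e.
apply: le_lt_trans hr; rewrite -e leeDl//.
by apply: integral_ge0 => x _.
Qed.

Lemma restr_int (m : {measure set T -> \bar R}) (D : set T) (mD : measurable D)
  (h : T -> \bar R) : (forall x, 0 <= h x) -> measurable_fun [set: T] h ->
  \int[m]_x h x < +oo -> \int[mrestr m mD]_x h x < +oo.
Proof.
move=> h0 mh; apply: (@fin_int _ (mrestr m (measurableC mD))) => // E mE.
rewrite /mrestr -[in RHS](setIT E) -(setUv D) setIUr; apply: esym; apply: measureU.
- exact: measurableI.
- by apply: measurableI => //; exact: measurableC.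
- by rewrite setIACA setICr setI0.
Qed.

Lemma scale_int (m : {measure set T -> \bar R}) (k : {nonneg R})
  (h : T -> \bar R) : (forall x, 0 <= h x) -> measurable_fun [set: T] h ->
  \int[mscale k m]_x h x = k%:num%:E * \int[m]_x h x.
Proof. by move=> h0 mh; rewrite ge0_integral_mscale. Qed.

Lemma add_int (m1 m2 : {measure set T -> \bar R})
  (h : T -> \bar R) : (forall x, 0 <= h x) -> measurable_fun [set: T] h ->
  \int[measure_add m1 m2]_x h x = \int[m1]_x h x + \int[m2]_x h x.
Proof. by move=> h0 mh; rewrite ge0_integral_measure_add. Qed.

End helpers.



Section h2.
Context d (T : measurableType d) (R : realType).
Local Open Scope ereal_scope.

Lemma jposE (Q : {charge set T -> \bar R}) E : measurable E ->
  jpos Q E = Q (E `&` (sval (hahn_pair Q)).1).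
Proof.
move=> mE; rewrite /jpos jordan_posE cjordan_posE /crestr0 mem_set//.
Qed.

Lemma jnegE (Q : {charge set T -> \bar R}) E : measurable E ->
  jneg Q E = - Q (E `&` (sval (hahn_pair Q)).2).
Proof.
move=> mE; rewrite /jneg jordan_negE cjordan_negE /crestr0 mem_set//.
Qed.

Lemma jdec (Q : {charge set T -> \bar R}) E : measurable E ->
  Q E = jpos Q E - jneg Q E.
Proof.
move=> mE; rewrite jposE// jnegE// oppeK.
have [[mP _] [mN _] PNT PN0] := svalP (hahn_pair Q).
exact: charge_partition.
Qed.

Lemma jposE' (Q : {charge set T -> \bar R}) E : measurable E ->
  jordan_pos (svalP (hahn_pair Q)) E = Q (E `&` (sval (hahn_pair Q)).1).
Proof. exact: jposE. Qed.

Lemma jnegE' (Q : {charge set T -> \bar R}) E : measurable E ->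
  jordan_neg (svalP (hahn_pair Q)) E = - Q (E `&` (sval (hahn_pair Q)).2).
Proof. exact: jnegE. Qed.

Lemma jdec' (Q : {charge set T -> \bar R}) E : measurable E ->
  Q E = jordan_pos (svalP (hahn_pair Q)) E - jordan_neg (svalP (hahn_pair Q)) E.
Proof. exact: jdec. Qed.

End h2.



Section h3.
Context d (T : measurableType d) (R : realType).
Local Open Scope ereal_scope.

Lemma finE (x : \bar R) : x \is a fin_num -> exists r : R, x = r%:E.
Proof. by move=> h; exists (fine x); rewrite fineK. Qed.

Lemma cfin (Q : {charge set T -> \bar R}) E : measurable E -> exists r : R, Q E = r%:E.
Proof. by move=> mE; apply: finE; rewrite fin_num_measure. Qed.

Lemma mfin (Q : {finite_measure set T -> \bar R}) E : measurable E -> exists r : R, Q E = r%:E.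
Proof. by move=> mE; apply: finE; rewrite fin_num_measure. Qed.

Lemma mix (P1 : probability T R) (PT P0 : {charge set T -> \bar R}) (a b : R)
  (ha : (0 < a)%R) (hb : (0 < b)%R)
  (hPT : forall E, measurable E -> PT E = a%:E * P1 E + b%:E * P0 E)
  (f : T -> R) (hf1 : P1.-integrable setT (EFin \o f)) (hf0 : s_integrable P0 f) :
  s_integrable PT f /\
  s_integral PT f = (a * fine (\int[P1]_x (f x)%:E) + b * fine (s_integral P0 f))%:E.
Proof.
set F := EFin \o f.
have mF : measurable_fun setT F := measurable_int _ hf1.
have mAF : measurable_fun setT (abse \o F) by exact: measurableT_comp.
have AF0 : forall x, 0 <= (abse \o F) x by move=> x; exact: abse_ge0.
case: hf0 => hp0 hn0.
pose an := NngNum (ltW ha); pose bn := NngNum (ltW hb).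
have [[mP _] [mN _] _ _] := svalP (hahn_pair PT).
have intP : forall (m : {measure set T -> \bar R}) (D : set T) (mD : measurable D),
  m.-integrable setT F -> \int[mrestr m mD]_x (abse \o F) x < +oo.
  move=> m D mD /integrableP [_ h]; exact: restr_int.
have hp : (jpos PT).-integrable setT F.
  apply/integrableP; split => //.
  apply: (@fin_int _ _ _ _ (mscale bn (mrestr (jneg P0) mP))
     (measure_add (mscale an (mrestr P1 mP)) (mscale bn (mrestr (jpos P0) mP)))) => //.
    move=> E mE.
    rewrite /= /msum !big_ord_recl /= big_ord0 adde0 /mscale /mrestr /=.
rewrite /mrestr jposE'// hPT; last exact: measurableI.
    rewrite (@jdec' _ _ _ P0); last exact: measurableI.
    have mEP : measurable (E `&` (sval (hahn_pair PT)).1) by exact: measurableI.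
    have [x1 ->] := mfin P1 _ mEP.
    have [x2 ->] := mfin (jpos P0) _ mEP.
    have [x3 ->] := mfin (jneg P0) _ mEP.
    rewrite -!EFinM -?EFinN -!EFinD -?EFinB; congr EFin; ring.
  rewrite add_int// !scale_int//.
  have [y1 ->] : exists y, \int[mrestr P1 mP]_x (abse \o F) x = y%:E.
    by apply: finE; rewrite ge0_fin_numE ?intP// integral_ge0.
  have [y2 ->] : exists y, \int[mrestr (jpos P0) mP]_x (abse \o F) x = y%:E.
    by apply: finE; rewrite ge0_fin_numE ?intP// integral_ge0.
  by rewrite -!EFinM -EFinD ltry.
have hn : (jneg PT).-integrable setT F.
  apply/integrableP; split => //.
  apply: (@fin_int _ _ _ _
     (measure_add (mscale an (mrestr P1 mN)) (mscale bn (mrestr (jpos P0) mN)))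
     (mscale bn (mrestr (jneg P0) mN))) => //.
    move=> E mE.
    rewrite /= /msum !big_ord_recl /= big_ord0 adde0 /mscale /mrestr /=.
    rewrite /mrestr jnegE'// hPT; last exact: measurableI.
    rewrite (@jdec' _ _ _ P0); last exact: measurableI.
    have mEP : measurable (E `&` (sval (hahn_pair PT)).2) by exact: measurableI.
    have [x1 ->] := mfin P1 _ mEP.
    have [x2 ->] := mfin (jpos P0) _ mEP.
    have [x3 ->] := mfin (jneg P0) _ mEP.
    rewrite -!EFinM -?EFinN -!EFinD -?EFinB -?EFinN -?EFinD; congr EFin; ring.
  rewrite !scale_int//.
  have [y1 ->] : exists y, \int[mrestr (jneg P0) mN]_x (abse \o F) x = y%:E.
    by apply: finE; rewrite ge0_fin_numE ?intP// integral_ge0.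
  by rewrite -!EFinM ltry.
split; first by split.
have keq : forall h, (forall x, 0 <= h x) -> measurable_fun setT h ->
  \int[jpos PT]_x h x + b%:E * \int[jneg P0]_x h x =
  (a%:E * \int[P1]_x h x + b%:E * \int[jpos P0]_x h x) + \int[jneg PT]_x h x.
  move=> h h0 mh.
  have := @key_int _ _ _ (jpos PT) (jneg PT)
    (measure_add (mscale an P1) (mscale bn (jpos P0))) (mscale bn (jneg P0)) _ h h0 mh.
    rewrite add_int// !scale_int//; apply.
  move=> E mE.
  rewrite /= /msum !big_ord_recl /= big_ord0 adde0 /mscale /=.
  have hh := hPT _ mE.
  rewrite (@jdec' _ _ _ PT)// (@jdec' _ _ _ P0)// in hh.
  have [x1 e1] := mfin P1 _ mE.
  have [x2 e2] := mfin (jpos P0) _ mE.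
  have [x3 e3] := mfin (jneg P0) _ mE.
  have [y1 f1] := mfin (jpos PT) _ mE.
  have [y2 f2] := mfin (jneg PT) _ mE.
  rewrite e1 e2 e3 f1 f2 in hh *.
  move: hh; rewrite -!EFinM -?EFinN -!EFinD -?EFinB -?EFinN -?EFinD => -[] hh2.
  congr EFin; lra.
have mFp : measurable_fun setT F^\+ by exact: measurable_funepos.
have mFn : measurable_fun setT F^\- by exact: measurable_funeneg.
have kp := keq _ (fun x => funepos_ge0 F x) mFp.
have kn := keq _ (fun x => funeneg_ge0 F x) mFn.
rewrite /s_integral.
rewrite (integralE (jpos PT) _ F) (integralE (jneg PT) _ F) (integralE P1 _ F).
rewrite (integralE (jpos P0) _ F) (integralE (jneg P0) _ F).
have [p1 ep1] := finE _ (integrable_pos_fin_num measurableT hp).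
have [p2 ep2] := finE _ (integrable_pos_fin_num measurableT hn).
have [p3 ep3] := finE _ (integrable_pos_fin_num measurableT hf1).
have [p4 ep4] := finE _ (integrable_pos_fin_num measurableT hp0).
have [p5 ep5] := finE _ (integrable_pos_fin_num measurableT hn0).
have [n1 en1] := finE _ (integrable_neg_fin_num measurableT hp).
have [n2 en2] := finE _ (integrable_neg_fin_num measurableT hn).
have [n3 en3] := finE _ (integrable_neg_fin_num measurableT hf1).
have [n4 en4] := finE _ (integrable_neg_fin_num measurableT hp0).
have [n5 en5] := finE _ (integrable_neg_fin_num measurableT hn0).
rewrite ep1 ep2 ep3 ep4 ep5 en1 en2 en3 en4 en5 in kp kn *.
move: kp kn; rewrite -!EFinM -!EFinD -?EFinB => -[] kp -[] kn.
rewrite /=.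
congr EFin; lra.
Qed.


End h3.

Theorem proposition1 (R : realType) (r l s d : nat)
  (g : r.-tuple R -> 'rV[R]_l) (A : set 'rV[R]_s) (m : 'rV[R]_s -> 'rV[R]_l)
  (Theta : set 'rV[R]_d) (P1 : 'rV[R]_d -> probability (r.-tuple R) R)
  (* m_1(theta) = \int g dP_1(.|theta) is a well-defined vector *)
  (hP1g : forall theta, Theta theta -> forall i : 'I_l,
      (P1 theta).-integrable setT (fun x => (g x 0 i)%:E))
  (PT : {charge set (r.-tuple R) -> \bar R})
  (lam_s : R) (theta_s : 'rV[R]_d) (alpha_s : 'rV[R]_s)
  (P0_s : {charge set (r.-tuple R) -> \bar R})
  (hlam_s : 0 < lam_s < 1) (htheta_s : Theta theta_s) (halpha_s : A alpha_s)
  (hP0_s : M_set g m alpha_s P0_s)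
  (hPT : forall E, measurable E ->
      PT E = (lam_s%:E * P1 theta_s E + (1 - lam_s)%:E * P0_s E)%E)
  (huniq :
     let mstar := s_vint g PT in
     let m1 := fun theta => p_vint g (P1 theta) in
     ((1 - lam_s)^-1 *: mstar - (lam_s / (1 - lam_s)) *: m1 theta_s = m alpha_s) /\
     forall (lam : R) (theta : 'rV[R]_d) (alpha : 'rV[R]_s),
       0 < lam < 1 -> Theta theta -> A alpha ->
       (1 - lam)^-1 *: mstar - (lam / (1 - lam)) *: m1 theta = m alpha ->
       [/\ lam = lam_s, theta = theta_s & alpha = alpha_s]) :
  forall (lam lam' : R) (theta theta' : 'rV[R]_d) (alpha alpha' : 'rV[R]_s)
         (P0 P0' : {charge set (r.-tuple R) -> \bar R}),
    0 < lam < 1 -> 0 < lam' < 1 -> Theta theta -> Theta theta' ->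
    A alpha -> A alpha' -> M_set g m alpha P0 -> M_set g m alpha' P0' ->
    (forall E, measurable E ->
       PT E = (lam%:E * P1 theta E + (1 - lam)%:E * P0 E)%E) ->
    (forall E, measurable E ->
       PT E = (lam'%:E * P1 theta' E + (1 - lam')%:E * P0' E)%E) ->
    [/\ lam = lam', theta = theta' & forall E, measurable E -> P0 E = P0' E].

Proof.
move=> lam lam' theta theta' alpha alpha' P0 P0' hl hl' ht ht' ha ha' hM hM' hE hE'.
have mom : forall (la : R) th al (Q : {charge set (r.-tuple R) -> \bar R}),
    0 < la < 1 -> Theta th -> M_set g m al Q ->
    (forall E, measurable E -> PT E = (la%:E * P1 th E + (1 - la)%:E * Q E)%E) ->
    (1 - la)^-1 *: s_vint g PT - (la / (1 - la)) *: p_vint g (P1 th) = m al.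
  move=> la th al Q /andP[la0 la1] hth [_ hQ] hEQ.
  apply/rowP => i; rewrite !mxE.
  have [hi hQi] := hQ i.
  have b0 : 0 < 1 - la by rewrite subr_gt0.
  have [_ ->] := @mix _ _ _ _ _ _ _ _ la0 b0 hEQ _ (hP1g _ hth i) hi.
  rewrite hQi /=.
  have bn : 1 - la != 0 by rewrite gt_eqF.
  by field.
move: huniq => /= [_ U].
have [e1 e2 _] := U _ _ _ hl ht ha (mom _ _ _ _ hl ht hM hE).
have [e1' e2' _] := U _ _ _ hl' ht' ha' (mom _ _ _ _ hl' ht' hM' hE').
subst lam lam' theta theta'.
split => // E mE.
have := hE _ mE; rewrite hE' // => h.
have [x1 ex1] := @mfin _ _ _ (P1 theta_s) _ mE.
have [x2 ex2] := @cfin _ _ _ P0 _ mE.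
have [x3 ex3] := @cfin _ _ _ P0' _ mE.
rewrite ex1 ex2 ex3 in h *.
move: h; rewrite -!EFinM -!EFinD => -[] h.
congr EFin.
case/andP: hlam_s => _ l1.
have bn : 1 - lam_s != 0 by rewrite gt_eqF // subr_gt0.
apply: (mulfI bn); lra.
Qed.
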